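(* Suppose $\mathrm{edim}(R) = n \ge 2$ and let $w_1 < w_2 < \cdots < w_N$ be the minimal generators of the numerical semigroup $V(R)$. Then $a_1 = w_1$, $a_2 = w_2$, and $$\{a_1, \ldots, a_n\} \subseteq \{w_1, \ldots, w_N\}.$$ If $R$ is a numerical semigroup ring, i.e. $R = k[[t^{w_1}, \ldots, t^{w_N}]]$, then $\{a_1, \ldots, a_n\} = \{w_1, \ldots, w_N\}$.
   Context: Let $k$ be a field and let $(R,\mathfrak m)$ be a complete local noetherian domain of dimension $1$ containing $k$ with $R/\mathfrak m = k$, with normalization $\overline R$ having residue field $k$, so $\overline R = k[[t]]$ and $R \subseteq k[[t]]$ is finite birational. Let $v$ be the $t$-adic valuation. For $A \subseteq k((t))$ let $v(A) = \{v(f): f\in A\setminus\{0\}\}$; $V(R) = v(R)$ is the value semigroup of $R$ (a numerical semigroup). The Herzog–Kunz sequence of $R$ is $v(\mathfrak m)\setminus v(\mathfrak m^2)$ listed increasingly as $a_1 < \cdots < a_n$, where $n = \mathrm{edim}(R) = \dim_k\mathfrak m/\mathfrak m^2$. *)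

(* Defs.v *)
From HB Require Import structures.
From mathcomp Require Import all_boot all_order all_algebra.
Set Implicit Arguments. Unset Strict Implicit. Unset Printing Implicit Defensive.
Import GRing.Theory.
Local Open Scope ring_scope.

(* Formal power series over K, i.e. elements of k[[t]], as coefficient
   functions: f i is the coefficient of t^i. *)
Definition pser (K : fieldType) := nat -> K.

Definition pcst (K : fieldType) (c : K) : pser K := fun i => if i == 0%N then c else 0.
Definition padd (K : fieldType) (f g : pser K) : pser K := fun i => f i + g i.
Definition pmul (K : fieldType) (f g : pser K) : pser K :=
  fun n => \sum_(i < n.+1) f i * g (n - i)%N.

Definition has_val (K : fieldType) (f : pser K) (x : nat) : Prop :=
  f x != 0 /\ forall j, (j < x)%N -> f j = 0.

Definition vals (K : fieldType) (A : pser K -> Prop) (x : nat) : Prop :=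
  exists f, A f /\ has_val f x.

(* R subset of k[[t]] is a k-subalgebra containing t^c k[[t]] for some c,
   i.e. a complete local one-dimensional domain containing k, finite and
   birational over k[[t]] (nonzero conductor). *)
Definition is_local_ring (K : fieldType) (R : pser K -> Prop) : Prop :=
  [/\ forall c : K, R (pcst c),
      forall f g, R f -> R g -> R (padd f g),
      forall f g, R f -> R g -> R (pmul f g)
    & exists c : nat, forall f : pser K, (forall i, (i < c)%N -> f i = 0) -> R f].

Definition mideal (K : fieldType) (R : pser K -> Prop) (f : pser K) : Prop :=
  R f /\ f 0%N = 0.

Definition msq (K : fieldType) (R : pser K -> Prop) (f : pser K) : Prop :=
  exists (m : nat) (g h : nat -> pser K),
    (forall i, (i < m)%N -> mideal R (g i) /\ mideal R (h i)) /\
    forall j, f j = \sum_(i < m) pmul (g i) (h i) j.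

(* edim(R) = dim_k m/m^2 = n : there are b_1..b_n in m whose classes form a
   k-basis of m/m^2. *)
Definition edim_is (K : fieldType) (R : pser K -> Prop) (n : nat) : Prop :=
  exists b : 'I_n -> pser K,
    [/\ forall i, mideal R (b i),
        forall g, mideal R g ->
          exists c : 'I_n -> K, msq R (fun j => g j - \sum_(i < n) c i * b i j)
      & forall c : 'I_n -> K, msq R (fun j => \sum_(i < n) c i * b i j) ->
          forall i, c i = 0].

Definition valsg (K : fieldType) (R : pser K -> Prop) : nat -> Prop := vals R.

Definition HKset (K : fieldType) (R : pser K -> Prop) (x : nat) : Prop :=
  vals (mideal R) x /\ ~ vals (msq R) x.

Definition min_gen (S : nat -> Prop) (x : nat) : Prop :=
  [/\ S x, (0 < x)%N &
      ~ exists y z, [/\ S y, S z, (0 < y)%N, (0 < z)%N & x = (y + z)%N]].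

(* R is the numerical semigroup ring k[[t^{w_1},...,t^{w_N}]], i.e. R consists
   of exactly the power series supported on V(R). *)
Definition is_semigroup_ring (K : fieldType) (R : pser K -> Prop) : Prop :=
  forall f : pser K, R f <-> (forall i, f i != 0 -> valsg R i).

(* Main.v *)
Require Import Defs.
From mathcomp Require Import all_boot all_order all_algebra.
From mathcomp Require Import zify.
From Stdlib Require Import Classical.

Section Helpers.
Import GRing.Theory.
Local Open Scope ring_scope.
Variable K : fieldType.

Lemma pmul_cst (c : K) (h : pser K) j : pmul (pcst c) h j = c * h j.
Proof.
rewrite /pmul big_ord_recl /= subn0 /pcst eqxx big1 ?addr0 // => i _.
by rewrite /= mul0r.
Qed.

Lemma pmul_low (f g : pser K) x y :
  (forall j, (j < x)%N -> f j = 0) -> (forall j, (j < y)%N -> g j = 0) ->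
  forall j, (j < x + y)%N -> pmul f g j = 0.
Proof.
move=> Hf Hg j Hj; rewrite /pmul big1 // => i _.
case: (ltnP i x) => H; first by rewrite Hf ?mul0r.
rewrite Hg ?mulr0 //; have := ltn_ord i; lia.
Qed.

Lemma pmul_val (f g : pser K) x y :
  has_val f x -> has_val g y -> has_val (pmul f g) (x + y).
Proof.
move=> [fx Hf] [gy Hg]; split; last exact: pmul_low.
have Hx : (x < (x + y).+1)%N by lia.
rewrite /pmul (bigD1 (Ordinal Hx)) //= big1 ?addr0.
  by rewrite addKn mulf_neq0.
move=> i /eqP Hi; have Hi' : nat_of_ord i <> x by move=> E; apply: Hi; apply: val_inj.
case: (ltnP i x) => H; first by rewrite Hf ?mul0r.
rewrite Hg ?mulr0 //; have := ltn_ord i; lia.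
Qed.

Definition approx (M : nat) (f : pser K) (P : {poly K}) :=
  forall j, (j < M)%N -> f j = P`_j.

Lemma approx_mul M f g P Q : approx M f P -> approx M g Q -> approx M (pmul f g) (P * Q).
Proof.
move=> Hf Hg j Hj; rewrite /pmul coefM; apply: eq_bigr => i _.
have := ltn_ord i => Hi.
rewrite Hf ?Hg //; lia.
Qed.

Lemma approx_add M f g P Q : approx M f P -> approx M g Q -> approx M (padd f g) (P + Q).
Proof. by move=> Hf Hg j Hj; rewrite /padd coefD Hf ?Hg. Qed.

Lemma approx_cst M (c : K) : approx M (pcst c) c%:P.
Proof. by move=> j _; rewrite coefC /pcst. Qed.

Definition pexp (f : pser K) k := iter k (pmul f) (pcst 1).

Lemma approx_exp M f P k : approx M f P -> approx M (pexp f k) (P ^+ k).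
Proof.
move=> Hf; elim: k => [|k IH] /=; first exact: approx_cst.
by rewrite exprS; apply: approx_mul.
Qed.

Lemma R_exp R f k : is_local_ring R -> R f -> R (pexp f k).
Proof.
case=> H1 _ H3 _ Hf; elim: k => [|k IH] /=; first exact: H1.
exact: H3.
Qed.


Section Main2.
Variables (R : pser K -> Prop) (HR : is_local_ring R).
Variables (f : pser K) (s d : nat).
Hypotheses (Hf : R f) (hfs : has_val f s) (s0 : (0 < s)%N) (sd : (s < d)%N).
Hypothesis Hmult : forall N, vals R N -> (N < d)%N -> exists k, N = (k * s)%N.

Let M := d.+1.
Let G : {poly K} := \poly_(i < M) f (i + s)%N.
Let F : {poly K} := 'X^s * G.

Lemma HF : approx M f F.
Proof.
move=> j Hj; rewrite coefXnM; case: ltnP => H; first by case: hfs => _ ->.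
by rewrite coef_poly subnK // ifT //; lia.
Qed.

Lemma coefFk k j : (F ^+ k)`_j = if (j < s * k)%N then 0 else (G ^+ k)`_(j - s * k).
Proof. by rewrite /F exprMn -exprM coefXnM. Qed.

Lemma coefG0k k : (G ^+ k)`_0 = f s ^+ k.
Proof. by rewrite -horner_coef0 horner_exp horner_coef0 coef_poly add0n. Qed.

Lemma lc_neq0 : f s != 0.
Proof. by case: hfs. Qed.

Lemma approx_R N : (N <= d)%N -> forall g, R g -> exists P h, [/\ R h,
   approx M h (P \Po F) & forall j, (j < N)%N -> g j = h j].
Proof.
case: HR => H1 H2 H3 _.
elim: N => [|N IH] HN g Hg.
  exists 0, (pcst 0); split; first exact: H1.
    by rewrite comp_poly0; apply: approx_cst.
  by [].
have [P [h [Rh Ah Eh]]] := IH (ltnW HN) g Hg.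
case: (eqVneq (g N) (h N)) => EN.
  exists P, h; split => // j; rewrite ltnS leq_eqVlt => /orP [/eqP -> //|]; exact: Eh.
set r := padd g (pmul (pcst (-1)) h).
have Er j : r j = g j - h j by rewrite /r /padd pmul_cst mulN1r.
have Rr : R r by apply: H2 => //; apply: H3.
have [k Nk] : exists k, N = (k * s)%N.
  apply: Hmult; last by lia.
  exists r; split => //; split; first by rewrite Er subr_eq0.
  by move=> j Hj; rewrite Er Eh ?subrr.
set c := (g N - h N) / f s ^+ k.
exists (P + c%:P * 'X^k), (padd h (pmul (pcst c) (pexp f k))); split.
- apply: H2 => //; apply: H3 => //; exact: R_exp.
- rewrite comp_polyD comp_polyM comp_polyC comp_Xn_poly.
  apply: approx_add => //; apply: approx_mul; first exact: approx_cst.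
  apply: approx_exp; exact: HF.
move=> j Hj; rewrite /padd pmul_cst (@approx_exp M f F k HF) ?coefFk; last by lia.
case: ltnP => Hjk.
  by rewrite mulr0 addr0 Eh //; lia.
have -> : j = N by lia.
rewrite (_ : (N - s * k)%N = 0%N); last by lia.
rewrite coefG0k /c divfK ?expf_neq0 ?lc_neq0 //.
by rewrite addrCA subrr addr0.
Qed.


Lemma F0 : F`_0 = 0.
Proof. by rewrite /F coefXnM s0. Qed.

Lemma prod_approx (g h : pser K) (A B : {poly K}) : g 0%N = 0 -> h 0%N = 0 -> A`_0 = 0 -> B`_0 = 0 ->
  (forall j, (j < d)%N -> g j = A`_j) -> (forall j, (j < d)%N -> h j = B`_j) ->
  approx M (pmul g h) (A * B).
Proof.
move=> g0 h0 A0 B0 Hg Hh j Hj; rewrite /pmul coefM; apply: eq_bigr => i _.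
have Hi := ltn_ord i.
case: (ltnP i d) => H1; case: (ltnP (j - i) d) => H2.
- by rewrite Hg ?Hh.
- have -> : nat_of_ord i = 0%N by rewrite /M in Hj; lia.
  by rewrite g0 A0 !mul0r.
- rewrite (_ : (j - i)%N = 0%N); last by rewrite /M in Hj; lia.
  by rewrite h0 B0 !mulr0.
- rewrite (_ : (j - i)%N = 0%N); last by rewrite /M in Hj; lia.
  by rewrite h0 B0 !mulr0.
Qed.

Lemma mideal_poly (g : pser K) : mideal R g -> exists P : {poly K},
  [/\ forall j, (j < d)%N -> g j = (P \Po F)`_j, P`_0 = 0 & (P \Po F)`_0 = 0].
Proof.
move=> [Rg g0].
have [P [h [_ Ah Eh]]] := @approx_R d (leqnn d) g Rg.
have E : forall j, (j < d)%N -> g j = (P \Po F)`_j.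
  by move=> j Hj; rewrite Eh // Ah // /M; lia.
have E0 : (P \Po F)`_0 = 0 by rewrite -E ?g0 //; lia.
exists P; split => //.
by move: E0; rewrite -[(P \Po F)`_0]horner_coef0 horner_comp horner_coef0 F0 horner_coef0.
Qed.

Lemma msq_poly (u : pser K) : msq R u -> exists T : {poly K},
  [/\ T`_0 = 0, T`_1 = 0 & approx M u (T \Po F)].
Proof.
move=> [m [g [h [Hgh Eu]]]].
suff : forall m', (m' <= m)%N -> exists T : {poly K}, [/\ T`_0 = 0, T`_1 = 0 &
   forall j, (j < M)%N -> \sum_(i < m') pmul (g i) (h i) j = (T \Po F)`_j].
  move/(_ m (leqnn m)) => [T [T0 T1 HT]]; exists T; split => // j Hj.
  by rewrite Eu HT.
elim=> [|m' IH] Hm.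
  by exists 0; split; rewrite ?coef0 // => j _; rewrite big_ord0 comp_poly0 coef0.
have [T [T0 T1 HT]] := IH (ltnW Hm).
have [Hg' Hh'] := Hgh m' Hm.
have [P [EP P0 PF0]] := @mideal_poly _ Hg'.
have [Q [EQ Q0 QF0]] := @mideal_poly _ Hh'.
exists (T + P * Q); split.
- by rewrite coefD coef0M P0 mul0r T0 addr0.
- by rewrite coefD T1 coefM !big_ord_recl big_ord0 /= P0 Q0 mul0r mulr0 !addr0.
move=> j Hj; rewrite big_ord_recr /= HT // comp_polyD comp_polyM coefD.
congr (_ + _); apply: prod_approx => //.
- by case: Hg'.
- by case: Hh'.
Qed.

Lemma vals_add x y : vals R x -> vals R y -> vals R (x + y)%N.
Proof.
case: HR => _ _ H3 _ [g [Rg Hg]] [h [Rh Hh]].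
exists (pmul g h); split; [exact: H3 | exact: pmul_val].
Qed.

Lemma vals_mul k : vals R (s * k)%N.
Proof.
elim: k => [|k IH].
  rewrite muln0; case: HR => H1 _ _ _; exists (pcst 1); split => //; split => //.
  by rewrite /pcst /= oner_neq0.
by rewrite mulnS; apply: vals_add => //; exists f.
Qed.

Lemma d_notin : ~ (exists y z, [/\ vals R y, vals R z, (0 < y)%N, (0 < z)%N & d = (y + z)%N]) ->
  ~ vals (msq R) d.
Proof.
move=> Hd [u [Hu [ud Hu0]]].
have [T [T0 T1 AT]] := @msq_poly _ Hu.
have uE j : (j <= d)%N -> u j = (T \Po F)`_j by move=> Hj; apply: AT; rewrite /M; lia.
have Tn0 : T != 0.
  apply/eqP => T0'; move: ud; rewrite uE // T0' comp_poly0 coef0.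
  by rewrite eqxx.
have [mu [q Hq ET]] := multiplicity_XsubC T 0.
move: Hq; rewrite Tn0 /= rootE horner_coef0 => q0.
rewrite polyC0 subr0 in ET.
have Tmu : T`_mu = q`_0 by rewrite ET coefMXn ltnn subnn.
have mu2 : (2 <= mu)%N.
  case: mu {ET} Tmu => [|[|mu]] // Tmu.
    by move: q0; rewrite -Tmu T0 eqxx.
  by move: q0; rewrite -Tmu T1 eqxx.
have ETF : T \Po F = ((q \Po F) * G ^+ mu) * 'X^(s * mu).
  rewrite ET comp_polyM comp_Xn_poly /F exprMn -exprM.
  by rewrite [X in _ * X]mulrC mulrA.
have H0 : ((q \Po F) * G ^+ mu)`_0 != 0.
  rewrite coef0M coefG0k -horner_coef0 horner_comp horner_coef0 F0 horner_coef0.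
  by rewrite mulf_neq0 // expf_neq0 // lc_neq0.
case: (ltnP (s * mu) d) => Hsd.
  have E : u (s * mu)%N = ((q \Po F) * G ^+ mu)`_0.
    rewrite uE; last by lia.
    by rewrite ETF coefMXn ltnn subnn.
  by move: H0; rewrite -E Hu0 ?eqxx.
case: (ltnP d (s * mu)) => Hsd'.
  by move: ud; rewrite uE // ETF coefMXn Hsd' eqxx.
apply: Hd; exists s, (s * (mu - 1))%N; split => //.
- by exists f.
- exact: vals_mul.
- by rewrite muln_gt0 s0 /=; lia.
- lia.
Qed.

End Main2.
End Helpers.


Lemma decomp (V : nat -> Prop) x : V x -> (0 < x)%N -> ~ min_gen V x ->
  exists y z, [/\ V y, V z, (0 < y)%N, (0 < z)%N & x = (y + z)%N].
Proof.
move=> Vx x0 Hn; apply: NNPP => H; apply: Hn; split => //.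
Qed.

Lemma strong_ind (P : nat -> Prop) :
  (forall n, (forall m, (m < n)%N -> P m) -> P n) -> forall n, P n.
Proof.
move=> H n; have: (n < n.+1)%N by [].
elim: n.+1 {-2}n => [//|N IH] m Hm; apply: H => k Hk; apply: IH; lia.
Qed.

Lemma L1 (V : nat -> Prop) (w : seq nat) (hwE : forall x, x \in w <-> min_gen V x) :
  forall x, V x -> (0 < x)%N -> exists2 y, y \in w & (y <= x)%N.
Proof.
elim/strong_ind => x IH Vx x0.
case: (classic (min_gen V x)) => Hm.
  by exists x => //; apply/hwE.
have [y [z [Vy Vz y0 z0 E]]] := @decomp V x Vx x0 Hm.
have [t Ht Hty] := IH y ltac:(lia) Vy y0.
exists t => //; lia.
Qed.

Theorem mainTheorem5 (K : fieldType) (R : pser K -> Prop)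
  (HR : is_local_ring R) (n : nat) (hn : (2 <= n)%N) (he : edim_is R n)
  (a w : seq nat)
  (ha : sorted ltn a) (haE : forall x, x \in a <-> HKset R x)
  (hw : sorted ltn w) (hwE : forall x, x \in w <-> min_gen (valsg R) x) :
  [/\ nth 0%N a 0 = nth 0%N w 0,
      nth 0%N a 1 = nth 0%N w 1,
      {subset a <= w}
    & is_semigroup_ring R -> a = w].
Proof.
have HR' := HR; case: HR' => H1 H2 H3 [c Hc].
rewrite /valsg in hwE.
pose e := c.+1.
pose te : pser K := fun i => if i == e then 1%R else 0%R.
have Rte : R te.
  apply: Hc => i Hi; rewrite /te; case: eqP => // E; rewrite /e in E; lia.
have Vte : vals R e.
  exists te; split => //; split; first by rewrite /te eqxx GRing.oner_neq0.
  by move=> j Hj; rewrite /te; case: eqP => // E; lia.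
have [y0 Hy0 _] := @L1 (vals R) _ hwE _ Vte (ltn0Sn c).
case Ew: w hw hwE Hy0 => [//|s w'] hw hwE _.
have Hs : min_gen (vals R) s by apply/hwE; rewrite inE eqxx.
have [Vs s0 _] := Hs.
have allw' : all (ltn s) w' := order_path_min ltn_trans hw.
have LB : forall x, vals R x -> (0 < x)%N -> (s <= x)%N.
  move=> x Vx x0; have [y Hy Hyx] := @L1 (vals R) _ hwE _ Vx x0.
  move: Hy; rewrite inE => /orP [/eqP Ey|Hy]; first by rewrite -Ey.
  have := allP allw' y Hy; rewrite /=; lia.
have [f [Rf hfs]] := Vs.
have mzero : forall g, mideal R g -> forall j, (j < s)%N -> g j = 0%R.
  move=> g [Rg g0]; elim/strong_ind => j IH Hj.
  case: (eqVneq (g j) 0%R) => // Hgj; exfalso.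
  have Vj : vals R j.
    exists g; split => //; split => // k Hk; apply: IH => //; lia.
  case: j {IH Hj Hgj Vj} (Hj) (Hgj) (Vj) => [|j] Hj Hgj Vj.
    by move: Hgj; rewrite g0 eqxx.
  have := LB _ Vj (ltn0Sn j); lia.
have vm : forall x, vals R x -> (0 < x)%N -> vals (mideal R) x.
  move=> x [g [Rg [gx gl]]] x0; exists g; split; split => //; exact: gl.
have notm2 : forall x, vals (mideal R) x -> ~ vals (msq R) x -> min_gen (vals R) x.
  move=> x [g [[Rg g0] [gx gl]]] Hn; split.
  - by exists g.
  - by case: x gx {gl Hn} => // gx; move: gx; rewrite g0 eqxx.
  move=> [y [z [Vy Vz y0' z0 E]]]; apply: Hn.
  have [g1 [Rg1 hv1]] := Vy; have [g2 [Rg2 hv2]] := Vz.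
  exists (pmul g1 g2); split.
    exists 1%N, (fun _ => g1), (fun _ => g2); split.
      move=> i _; split; split => //; [case: hv1 => _ -> | case: hv2 => _ ->] => //.
    by move=> j; rewrite big_ord1.
  rewrite E; exact: pmul_val.
have sub : {subset a <= w}.
  move=> x /haE [Hm Hn]; rewrite Ew; apply/hwE; exact: notm2.
have sa : s \in a.
  apply/haE; split; first exact: vm.
  move=> [u [[m [g [h [Hgh Eu]]]] [us _]]]; move: us; rewrite Eu big1 ?eqxx // => i _.
  have [Hg Hh] := Hgh i (ltn_ord i).
  rewrite (@pmul_low K (g i) (h i) s s) //; [exact: mzero Hg | exact: mzero Hh | lia].
rewrite Ew in sub.
case Ea: a ha haE sa sub => [//|b a'] ha haE sa sub.
have alla' : all (ltn b) a' := order_path_min ltn_trans ha.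
have bs : b = s.
  have : b \in s :: w' by apply: sub; rewrite inE eqxx.
  rewrite inE => /orP [/eqP //|Hb]; have := allP allw' b Hb.
  move: sa; rewrite inE => /orP [/eqP -> /= | Hs']; first lia.
  have := allP alla' s Hs'; rewrite /=; lia.
subst b.
split => //.
- case Ew': w' hw hwE allw' sub => [|d w''] hw hwE allw' sub.
  + case Ea': a' alla' sub => [//|b' a''] alla' sub; exfalso.
    have : b' \in [:: s] by apply: sub; rewrite !inE eqxx orbT.
    rewrite inE => /eqP Eb; move: alla'; rewrite /= Eb ltnn.
    done.
  + have Hd : min_gen (vals R) d by apply/hwE; rewrite !inE eqxx orbT.
    have sd : (s < d)%N by move: allw' => /andP [].
    have alld : all (ltn d) w'' := order_path_min ltn_trans (path_sorted hw).
    have Hmult : forall N, vals R N -> (N < d)%N -> exists k, N = (k * s)%N.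
      elim/strong_ind => N IH VN Nd.
      case: (posnP N) => [->|N0]; first by exists 0%N.
      case: (classic (min_gen (vals R) N)) => Hm.
        move/hwE: Hm; rewrite !inE => /orP [/eqP ->|/orP [/eqP E|HN]].
        * by exists 1%N; rewrite mul1n.
        * lia.
        * have := allP alld N HN; rewrite /=; lia.
      have [y [z [Vy Vz y0' z0 E]]] := @decomp (vals R) N VN N0 Hm.
      have [k1 E1] := IH y ltac:(lia) Vy ltac:(lia).
      have [k2 E2] := IH z ltac:(lia) Vz ltac:(lia).
      by exists (k1 + k2)%N; rewrite E E1 E2 mulnDl.
    have [Vd d0 Hdd] := Hd.
    have dnot := @d_notin K R HR f s d Rf hfs s0 sd Hmult Hdd.
    have da : d \in s :: a' by apply/haE; split; [exact: vm | exact: dnot].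
    case Ea': a' ha haE alla' sub da => [|b' a''] ha haE alla' sub da.
      by move: da; rewrite inE => /eqP E; lia.
    have sb' : (s < b')%N by move: alla' => /andP [].
    have : b' \in [:: s, d & w''] by apply: sub; rewrite !inE eqxx !orbT.
    rewrite !inE => /orP [/eqP E|/orP [/eqP -> //|Hb']]; first lia.
    have := allP alld b' Hb'; rewrite /= => db'.
    move: da; rewrite !inE => /orP [/eqP E|/orP [/eqP E|Hda]]; try lia.
    have := allP (order_path_min ltn_trans (path_sorted ha)) d Hda; rewrite /=; lia.
- move=> Hsr.
  apply: (irr_sorted_eq ltn_trans ltnn ha hw) => x; apply/idP/idP; first exact: sub.
  move/hwE => [Vx x0 Hx]; apply/haE; split; first exact: vm.
  move=> [u [[m [g [h [Hgh Eu]]]] [ux _]]]; move: ux; rewrite Eu big1 ?eqxx // => i _.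
  have [[Rg g0] [Rh h0]] := Hgh i (ltn_ord i).
  rewrite /pmul big1 // => j _.
  case: (eqVneq (g i j) 0%R) => [->|gn]; first by rewrite GRing.mul0r.
  case: (eqVneq (h i (x - j)%N) 0%R) => [->|hn0]; first by rewrite GRing.mulr0.
  exfalso; apply: Hx; exists j, (x - j)%N; split.
  + exact: (proj1 (Hsr _) Rg j gn).
  + exact: (proj1 (Hsr _) Rh _ hn0).
  + by case: (posnP j) gn => // ->; rewrite g0 eqxx.
  + have := ltn_ord j; case: (ltnP j x) => Hj; first by rewrite subn_gt0.
    move=> Hj'; have Ej : nat_of_ord j = x by lia.
    by move: hn0; rewrite Ej subnn h0 eqxx.
  + have := ltn_ord j; lia.
Qed.
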